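(* Let $\boldsymbol{f}$ be a clean map on an $\boldsymbol{\mathcal{L}}_\Lambda$ modal space $\boldsymbol{X}$. Then $\boldsymbol{f}$ is continuous with respect to the Stone topology on $\boldsymbol{X}$.
   Context: Given a countable set $\Phi$ of atoms and a finite set $I$ of agents, $\mathcal{L}$ is the modal language $\varphi::=\top\mid p\mid\neg\varphi\mid\varphi\wedge\varphi\mid\square_i\varphi$. A logic $\Lambda$ is a normal modal logic over $\mathcal{L}$ extending $K$; $\boldsymbol{\varphi}$ is the class of formulas $\Lambda$-equivalent to $\varphi$, $\boldsymbol{\mathcal{L}}_\Lambda$ the set of such classes. Kripke models $M=(\llbracket M\rrbracket,R,\llbracket\cdot\rrbracket)$ have countable nonempty state sets, relations $R_i$ and a valuation; pointed models $Ms$ are evaluated with standard semantics. For a set $X$ of pointed Kripke models, the $\boldsymbol{\mathcal{L}}_\Lambda$ modal space is $\boldsymbol{X}=\{\boldsymbol{x}:x\in X\}$, $\boldsymbol{x}=\{y\in X:y\vDash\varphi\text{ iff }x\vDash\varphi\text{ for all }\varphi\}$. The Stone topology on $\boldsymbol{X}$ has basis $U_{\boldsymbol{\varphi}}=\{\boldsymbol{x}:x\vDash\varphi\}$, $\varphi\in\mathcal{L}$. A multi-pointed action model is $\Sigma\Gamma=(\llbracket\Sigma\rrbracket,\mathsf{R},pre,post,\Gamma)$: countable nonempty set of actions, relations $\mathsf{R}_i$ on it, $pre:\llbracket\Sigma\rrbracket\to\mathcal{L}$, $post:\llbracket\Sigma\rrbracket\to\mathcal{L}$ with each $post(\sigma)$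 either $\top$ or a conjunction of literals over $\Phi$, and $\emptyset\ne\Gamma\subseteq\llbracket\Sigma\rrbracket$. It is precondition finite if $\{\boldsymbol{pre(\sigma)}\}$ is finite; exhaustive over $X$ if each $x\in X$ satisfies $pre(\sigma)$ for some $\sigma\in\Gamma$; deterministic over $X$ if no $x\in X$ satisfies $pre(\sigma)\wedge pre(\sigma')$ for distinct $\sigma,\sigma'\in\Gamma$. The product update $Ms\otimes\Sigma\Gamma$ has states $\{(s,\sigma):Ms\vDash pre(\sigma)\}$, relations $(s,\sigma)R'_i(t,\tau)$ iff $sR_it$ and $\sigma\mathsf{R}_i\tau$, valuation $\llbracket p\rrbracket'=\{(s,\sigma):s\in\llbracket p\rrbracket,post(\sigma)\nvDash\neg p\}\cup\{(s,\sigma):post(\sigma)\vDash p\}$, and designated state $(s,\sigma)$ with $\sigma\in\Gamma$ the unique action with $Ms\vDash pre(\sigma)$. $\Sigma\Gamma$ is closing over $X$ if $x\otimes\Sigma\Gamma\in X$ for all $x\in X$. A map $\boldsymbol{f}:\boldsymbol{X}\to\boldsymbol{X}$ is clean if there is a precondition finite $\Sigma\Gamma$, closing, deterministic and exhaustive over $X$, with $\boldsymbol{f}(\boldsymbol{x})=\boldsymbol{y}$ iff $x\otimes\Sigma\Gamma\in\boldsymbol{y}$. *)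

(* Defs.v *)
From Stdlib Require Import List Arith Cantor ProofIrrelevance.


Definition countable (T : Type) : Prop :=
  exists f : T -> nat, forall a b, f a = f b -> a = b.

Definition finite_type (T : Type) : Prop := exists l : list T, forall a, In a l.

Section Lang.
Context {Atom Ag : Type}.

Inductive form : Type :=
| Top : form
| Var : Atom -> form
| Neg : form -> form
| And : form -> form -> form
| Box : Ag -> form -> form.

Definition Imp (p q : form) : form := Neg (And p (Neg q)).
Definition Iff (p q : form) : form := And (Imp p q) (Imp q p).

(* propositional evaluation: atoms and boxed formulas are treated as
   propositional letters, valued by g *)
Fixpoint peval (g : form -> Prop) (p : form) : Prop :=
  match p with
  | Top => True
  | Var a => g (Var a)
  | Neg q => ~ peval g q
  | And q r => peval g q /\ peval g r
  | Box i q => g (Box i q)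
  end.

Definition tautology (p : form) : Prop := forall g, peval g p.

Definition pentails (p q : form) : Prop := forall g, peval g p -> peval g q.

Fixpoint subst (s : Atom -> form) (p : form) : form :=
  match p with
  | Top => Top
  | Var a => s a
  | Neg q => Neg (subst s q)
  | And q r => And (subst s q) (subst s r)
  | Box i q => Box i (subst s q)
  end.

Record normal_logic (L : form -> Prop) : Prop := {
  nl_taut : forall p, tautology p -> L p;
  nl_K : forall i p q, L (Imp (Box i (Imp p q)) (Imp (Box i p) (Box i q)));
  nl_MP : forall p q, L p -> L (Imp p q) -> L q;
  nl_nec : forall i p, L p -> L (Box i p);
  nl_subst : forall s p, L p -> L (subst s p)
}.

Definition lequiv (L : form -> Prop) (p q : form) : Prop := L (Iff p q).

Record kmodel : Type := {
  st : Type;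
  st_count : countable st;
  st_inh : inhabited st;
  rel : Ag -> st -> st -> Prop;
  val : Atom -> st -> Prop
}.

Record pmodel : Type := { pm : kmodel; pt : st pm }.

Fixpoint sat (M : kmodel) (s : st M) (p : form) : Prop :=
  match p with
  | Top => True
  | Var a => val M a s
  | Neg q => ~ sat M s q
  | And q r => sat M s q /\ sat M s r
  | Box i q => forall t, rel M i s t -> sat M t q
  end.

Definition psat (x : pmodel) (p : form) : Prop := sat (pm x) (pt x) p.

Inductive literal : form -> Prop :=
| lit_pos : forall a, literal (Var a)
| lit_neg : forall a, literal (Neg (Var a)).

Inductive lit_conj : form -> Prop :=
| lc_lit : forall p, literal p -> lit_conj p
| lc_and : forall p q, lit_conj p -> lit_conj q -> lit_conj (And p q).

Record amodel : Type := {
  act : Type;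
  act_count : countable act;
  act_inh : inhabited act;
  arel : Ag -> act -> act -> Prop;
  pre : act -> form;
  post : act -> form;
  post_ok : forall a, post a = Top \/ lit_conj (post a);
  des : act -> Prop;
  des_ne : exists a, des a
}.

Lemma countable_upd (M : kmodel) (S : amodel) :
  countable {p : st M * act S | sat M (fst p) (pre S (snd p))}.
Proof.
  destruct (st_count M) as [f Hf]; destruct (act_count S) as [g Hg].
  exists (fun p => to_nat (f (fst (proj1_sig p)), g (snd (proj1_sig p)))).
  intros [[a1 b1] h1] [[a2 b2] h2] E.
  apply (f_equal of_nat) in E; rewrite !cancel_of_to in E.
  injection E as E1 E2; apply Hf in E1; apply Hg in E2; subst.
  f_equal; apply proof_irrelevance.
Qed.

Lemma inhabited_upd (M : kmodel) (S : amodel) (s : st M) (a : act S) :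
  sat M s (pre S a) ->
  inhabited {p : st M * act S | sat M (fst p) (pre S (snd p))}.
Proof. intro h; constructor; exists (s, a); exact h. Qed.

Definition upd_model (M : kmodel) (S : amodel) (s0 : st M) (a0 : act S)
  (h0 : sat M s0 (pre S a0)) : kmodel :=
  {| st := {p : st M * act S | sat M (fst p) (pre S (snd p))};
     st_count := countable_upd M S;
     st_inh := inhabited_upd M S s0 a0 h0;
     rel := fun i u v => rel M i (fst (proj1_sig u)) (fst (proj1_sig v)) /\
                         arel S i (snd (proj1_sig u)) (snd (proj1_sig v));
     val := fun p u =>
       (val M p (fst (proj1_sig u)) /\
        ~ pentails (post S (snd (proj1_sig u))) (Neg (Var p))) \/
       pentails (post S (snd (proj1_sig u))) (Var p) |}.

Definition upd_pointed (M : kmodel) (S : amodel) (s0 : st M) (a0 : act S)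
  (h0 : sat M s0 (pre S a0)) : pmodel :=
  {| pm := upd_model M S s0 a0 h0;
     pt := exist _ (s0, a0) h0 |}.

(* "x (x) Sigma Gamma \in P" : the designated state is (s, a) with a in Gamma
   and x |= pre(a) (unique when the action model is deterministic over X) *)
Definition upd_in (x : pmodel) (S : amodel) (P : pmodel -> Prop) : Prop :=
  exists a (ha : des S a) (h : psat x (pre S a)), P (upd_pointed (pm x) S (pt x) a h).

Definition precondition_finite (L : form -> Prop) (S : amodel) : Prop :=
  exists l : list form, forall a, exists q, In q l /\ lequiv L (pre S a) q.

Definition exhaustive (X : pmodel -> Prop) (S : amodel) : Prop :=
  forall x, X x -> exists a, des S a /\ psat x (pre S a).

Definition deterministic (X : pmodel -> Prop) (S : amodel) : Prop :=
  forall x, X x -> forall a b, des S a -> des S b -> a <> b ->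
    ~ (psat x (pre S a) /\ psat x (pre S b)).

Definition closing (X : pmodel -> Prop) (S : amodel) : Prop :=
  forall x, X x -> upd_in x S X.

Definition mclass (X : pmodel -> Prop) (x : pmodel) : pmodel -> Prop :=
  fun y => X y /\ (forall p, psat y p <-> psat x p).

Definition mspace (X : pmodel -> Prop) : Type :=
  {C : pmodel -> Prop | exists x, X x /\ C = mclass X x}.

Definition mpoint (X : pmodel -> Prop) (x : pmodel) (hx : X x) : mspace X :=
  exist _ (mclass X x) (ex_intro _ x (conj hx eq_refl)).

Definition basic_open (X : pmodel -> Prop) (p : form) : mspace X -> Prop :=
  fun c => exists x, X x /\ proj1_sig c = mclass X x /\ psat x p.

Definition stone_open (X : pmodel -> Prop) (O : mspace X -> Prop) : Prop :=
  forall c, O c -> exists p, basic_open X p c /\ (forall d, basic_open X p d -> O d).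

Definition stone_continuous (X : pmodel -> Prop) (f : mspace X -> mspace X) : Prop :=
  forall O, stone_open X O -> stone_open X (fun c => O (f c)).

Definition clean (L : form -> Prop) (X : pmodel -> Prop) (f : mspace X -> mspace X) : Prop :=
  exists S : amodel,
    precondition_finite L S /\ closing X S /\ deterministic X S /\ exhaustive X S /\
    (forall x (hx : X x) (d : mspace X), f (mpoint X x hx) = d <-> upd_in x S (proj1_sig d)).

End Lang.

(* Main.v *)
Require Import Defs.
From Stdlib Require Import List Arith Lia Classical ProofIrrelevance.
Import ListNotations.

Fixpoint depth {Atom Ag : Type} (p : @form Atom Ag) : nat :=
  match p with
  | Top => 0 | Var _ => 0 | Neg q => depth q
  | And q r => Nat.max (depth q) (depth r)
  | Box _ q => S (depth q)
  end.

Fixpoint atoms {Atom Ag : Type} (p : @form Atom Ag) : list Atom :=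
  match p with
  | Top => [] | Var a => [a] | Neg q => atoms q
  | And q r => atoms q ++ atoms r
  | Box _ q => atoms q
  end.

Definition eqv0 {Atom Ag : Type} (B : list (@form Atom Ag)) (M M' : @kmodel Atom Ag)
  (s : st M) (s' : st M') : Prop := forall q, In q B -> (sat M s q <-> sat M' s' q).

Fixpoint eqv {Atom Ag : Type} (B : list (@form Atom Ag)) (n : nat) (M M' : @kmodel Atom Ag)
  (s : st M) (s' : st M') : Prop :=
  match n with
  | 0 => eqv0 B M M' s s'
  | S n => eqv0 B M M' s s' /\ forall i,
      (forall t, rel M i s t -> exists t', rel M' i s' t' /\ eqv B n M M' t t') /\
      (forall t', rel M' i s' t' -> exists t, rel M i s t /\ eqv B n M M' t t')
  end.

Lemma eqv_0 {Atom Ag : Type} B n (M M' : @kmodel Atom Ag) s s' :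
  eqv B n M M' s s' -> eqv0 B M M' s s'.
Proof. destruct n; simpl; tauto. Qed.

Definition Lst {Atom Ag : Type} (L : @form Atom Ag -> Prop) (M : @kmodel Atom Ag) (s : st M) :=
  forall p, L p -> sat M s p.

Lemma Lst_succ {Atom Ag : Type} (L : @form Atom Ag -> Prop) (hL : normal_logic L) M s i t :
  Lst L M s -> rel M i s t -> Lst L M t.
Proof.
  intros H R p Hp. apply (nl_nec _ hL i) in Hp. exact (H _ Hp t R).
Qed.

Lemma lequiv_sat {Atom Ag : Type} (L : @form Atom Ag -> Prop) M s p q :
  Lst L M s -> lequiv L p q -> (sat M s p <-> sat M s q).
Proof.
  intros H E. apply H in E. simpl in E. destruct E as [E1 E2].
  split; intro h; apply NNPP; intro n; [apply E1|apply E2]; tauto.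
Qed.

Lemma upd_eqv {Atom Ag : Type} (L : @form Atom Ag -> Prop) (hL : normal_logic L)
  (S0 : @amodel Atom Ag) (B : list (@form Atom Ag))
  (hB : forall a, exists q, In q B /\ lequiv L (pre S0 a) q)
  (M M' : @kmodel Atom Ag) s0 a0 h0 s0' a0' h0' :
  forall phi k, depth phi <= k -> (forall a, In a (atoms phi) -> In (Var a) B) ->
  forall (u : st (upd_model M S0 s0 a0 h0)) (u' : st (upd_model M' S0 s0' a0' h0')),
  snd (proj1_sig u) = snd (proj1_sig u') ->
  Lst L M (fst (proj1_sig u)) -> Lst L M' (fst (proj1_sig u')) ->
  eqv B k M M' (fst (proj1_sig u)) (fst (proj1_sig u')) ->
  (sat _ u phi <-> sat _ u' phi).
Proof.
  induction phi as [|a|q IH|q IHq r IHr|i q IH]; intros k hd hat u u' Es Lu Lu' E.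
  - simpl; tauto.
  - destruct u as [[s b] hs]; destruct u' as [[s' b'] hs']; simpl in *; subst b'.
    apply eqv_0 in E. assert (Hv := E (Var a) (hat a (or_introl eq_refl))). simpl in Hv.
    tauto.
  - simpl in *. rewrite (IH k hd hat u u' Es Lu Lu' E). tauto.
  - simpl in *.
    rewrite (IHq k ltac:(lia) ltac:(intros; apply hat; apply in_or_app; tauto) u u' Es Lu Lu' E).
    rewrite (IHr k ltac:(lia) ltac:(intros; apply hat; apply in_or_app; tauto) u u' Es Lu Lu' E).
    tauto.
  - destruct k as [|k]; simpl in hd; [lia|].
    destruct u as [[s b] hs]; destruct u' as [[s' b'] hs']; simpl in *; subst b'.
    destruct E as [E0 E]. destruct (E i) as [Ef Eb].
    split.
    + intros H [[t' c] ht'] [R1 R2]; simpl in *.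
      destruct (Eb t' R1) as [t [Rt Et]].
      assert (Lt := Lst_succ L hL M s i t Lu Rt).
      assert (Lt' := Lst_succ L hL M' s' i t' Lu' R1).
      assert (hc : sat M t (pre S0 c)).
      { destruct (hB c) as [qc [Iq Eq]].
        apply (lequiv_sat L M t _ _ Lt Eq).
        apply (eqv_0 B k M M' t t' Et qc Iq).
        apply (lequiv_sat L M' t' _ _ Lt' Eq). exact ht'. }
      pose (v := exist (fun p : st M * act S0 => sat M (fst p) (pre S0 (snd p))) (t, c) hc).
      specialize (H v (conj Rt R2)).
      exact (proj1 (IH k ltac:(lia) hat v (exist _ (t', c) ht') eq_refl Lt Lt' Et) H).
    + intros H [[t c] ht] [R1 R2]; simpl in *.
      destruct (Ef t R1) as [t' [Rt Et]].
      assert (Lt := Lst_succ L hL M s i t Lu R1).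
      assert (Lt' := Lst_succ L hL M' s' i t' Lu' Rt).
      assert (hc : sat M' t' (pre S0 c)).
      { destruct (hB c) as [qc [Iq Eq]].
        apply (lequiv_sat L M' t' _ _ Lt' Eq).
        apply (eqv_0 B k M M' t t' Et qc Iq).
        apply (lequiv_sat L M t _ _ Lt Eq). exact ht. }
      pose (v := exist (fun p : st M' * act S0 => sat M' (fst p) (pre S0 (snd p))) (t', c) hc).
      specialize (H v (conj Rt R2)).
      exact (proj2 (IH k ltac:(lia) hat (exist _ (t, c) ht) v eq_refl Lt Lt' Et) H).
Qed.

Fixpoint lits {Atom Ag : Type} (B : list (@form Atom Ag)) : list (@form Atom Ag) :=
  match B with
  | [] => [Top]
  | b :: B => flat_map (fun c => [And c b; And c (Neg b)]) (lits B)
  end.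

Lemma lits_cover {Atom Ag : Type} (B : list (@form Atom Ag)) M s :
  exists c, In c (lits B) /\ sat M s c.
Proof.
  induction B as [|b B IH]; simpl.
  - exists Top; simpl; tauto.
  - destruct IH as [c [Ic Sc]]. destruct (classic (sat M s b)) as [Hb|Hb].
    + exists (And c b); split; [apply in_flat_map; exists c; simpl; tauto | simpl; tauto].
    + exists (And c (Neg b)); split; [apply in_flat_map; exists c; simpl; tauto | simpl; tauto].
Qed.

Lemma lits_char {Atom Ag : Type} (B : list (@form Atom Ag)) M M' s s' :
  forall c, In c (lits B) -> sat M s c -> sat M' s' c -> eqv0 B M M' s s'.
Proof.
  induction B as [|b B IH]; simpl; intros c Ic H H'.
  - intros q [].
  - apply in_flat_map in Ic. destruct Ic as [c' [Ic' Ic]]. simpl in Ic.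
    intros q [<-|Iq].
    + destruct Ic as [<-|[<-|[]]]; simpl in *; tauto.
    + destruct Ic as [<-|[<-|[]]]; simpl in *; eapply IH; eauto; tauto.
Qed.

Fixpoint powl {T : Type} (l : list T) : list (list T) :=
  match l with
  | [] => [[]]
  | x :: l => powl l ++ map (cons x) (powl l)
  end.

Lemma powl_sub {T : Type} (l : list T) : forall S, In S (powl l) -> forall x, In x S -> In x l.
Proof.
  induction l as [|y l IH]; simpl; intros S H x Hx.
  - destruct H as [<-|[]]; destruct Hx.
  - apply in_app_or in H; destruct H as [H|H].
    + right; eauto.
    + apply in_map_iff in H; destruct H as [S' [<- H]]. destruct Hx as [<-|Hx]; eauto.
Qed.

Lemma powl_filter {T : Type} (l : list T) (P : T -> Prop) :
  exists S, In S (powl l) /\ (forall x, In x l -> P x -> In x S) /\ (forall x, In x S -> P x).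
Proof.
  induction l as [|y l IH]; simpl.
  - exists []; simpl; tauto.
  - destruct IH as [S [IS [HS HS']]]. destruct (classic (P y)) as [Py|Py].
    + exists (y :: S); split; [|split].
      * apply in_or_app; right; apply in_map; exact IS.
      * intros x [<-|Ix] Px; simpl; auto.
      * intros x [<-|Ix]; auto.
    + exists S; split; [|split].
      * apply in_or_app; left; exact IS.
      * intros x [<-|Ix] Px; [tauto| auto].
      * auto.
Qed.

Fixpoint conjl {Atom Ag : Type} (l : list (@form Atom Ag)) : @form Atom Ag :=
  match l with [] => Top | p :: l => And p (conjl l) end.

Lemma conjl_sat {Atom Ag : Type} M s (l : list (@form Atom Ag)) :
  sat M s (conjl l) <-> forall p, In p l -> sat M s p.
Proof.
  induction l as [|p l IH]; simpl.
  - split; [intros _ q []|tauto].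
  - rewrite IH. split; [intros [h1 h2] q [<-|Iq]; auto | intros h; split; auto].
Qed.

Definition disjl {Atom Ag : Type} (l : list (@form Atom Ag)) : @form Atom Ag :=
  Neg (conjl (map Neg l)).

Lemma disjl_sat {Atom Ag : Type} M s (l : list (@form Atom Ag)) :
  sat M s (disjl l) <-> exists p, In p l /\ sat M s p.
Proof.
  unfold disjl; simpl; rewrite conjl_sat. split.
  - intro h; apply NNPP; intro n; apply h; intros q Iq.
    apply in_map_iff in Iq; destruct Iq as [p [<- Ip]]; simpl; intro; apply n; eauto.
  - intros [p [Ip Sp]] h. apply (h (Neg p)); [apply in_map; auto|auto].
Qed.

Definition Dia {Atom Ag : Type} (i : Ag) (p : @form Atom Ag) : @form Atom Ag := Neg (Box i (Neg p)).

Lemma Dia_sat {Atom Ag : Type} M s i (p : @form Atom Ag) :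
  sat M s (Dia i p) <-> exists t, rel M i s t /\ sat M t p.
Proof.
  simpl; split.
  - intro h; apply NNPP; intro n; apply h; intros t R St; apply n; eauto.
  - intros [t [R St]] h; exact (h t R St).
Qed.

Definition Dfm {Atom Ag : Type} (i : Ag) (S : list (@form Atom Ag)) : @form Atom Ag :=
  And (conjl (map (Dia i) S)) (Box i (disjl S)).

Definition ext {Atom Ag : Type} (T0 : list (@form Atom Ag)) (i : Ag) (T : list (@form Atom Ag)) :=
  flat_map (fun c => map (fun S => And c (Dfm i S)) (powl T0)) T.

Fixpoint types {Atom Ag : Type} (B : list (@form Atom Ag)) (lAg : list Ag) (n : nat) : list (@form Atom Ag) :=
  match n with
  | 0 => lits B
  | S n => fold_right (ext (types B lAg n)) (lits B) lAg
  end.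

Lemma fold_cover {Atom Ag : Type} (B T0 : list (@form Atom Ag)) M
  (h0 : forall t, exists c, In c T0 /\ sat M t c) :
  forall ag s, exists c, In c (fold_right (ext T0) (lits B) ag) /\ sat M s c.
Proof.
  induction ag as [|i ag IH]; intro s; simpl.
  - apply lits_cover.
  - destruct (IH s) as [c [Ic Sc]].
    destruct (powl_filter T0 (fun p => exists t, rel M i s t /\ sat M t p))
      as [S [IS [HS HS']]].
    exists (And c (Dfm i S)). split.
    + unfold ext; apply in_flat_map; exists c; split; auto. apply in_map_iff; eauto.
    + simpl; split; auto. split.
      * apply conjl_sat; intros p Ip. apply in_map_iff in Ip; destruct Ip as [q [<- Iq]].
        apply Dia_sat. auto.
      * intros t R. apply disjl_sat. destruct (h0 t) as [q [Iq Sq]]. exists q; split; eauto.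
Qed.

Lemma types_cover {Atom Ag : Type} (B : list (@form Atom Ag)) lAg n M s :
  exists c, In c (types B lAg n) /\ sat M s c.
Proof.
  revert s; induction n as [|n IHn]; intro s; simpl.
  - apply lits_cover.
  - apply fold_cover; auto.
Qed.

Lemma fold_char {Atom Ag : Type} (B T0 : list (@form Atom Ag)) n M M'
  (h0 : forall c t t', In c T0 -> sat M t c -> sat M' t' c -> eqv B n M M' t t') :
  forall ag c s s', In c (fold_right (ext T0) (lits B) ag) -> sat M s c -> sat M' s' c ->
  eqv0 B M M' s s' /\ forall i, In i ag ->
      (forall t, rel M i s t -> exists t', rel M' i s' t' /\ eqv B n M M' t t') /\
      (forall t', rel M' i s' t' -> exists t, rel M i s t /\ eqv B n M M' t t').
Proof.
  induction ag as [|j ag IH]; simpl; intros c s s' Ic H H'.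
  - split; [eapply lits_char; eauto | intros i []].
  - unfold ext at 1 in Ic. apply in_flat_map in Ic. destruct Ic as [c' [Ic' Ic]].
    apply in_map_iff in Ic. destruct Ic as [S [<- IS]].
    destruct H as [H1 [H2 H3]]; destruct H' as [H1' [H2' H3']].
    destruct (IH c' s s' Ic' H1 H1') as [E0 E]. split; auto.
    intros i [->|Ii]; [|auto].
    rewrite conjl_sat in H2, H2'. split.
    + intros t R. destruct (proj1 (disjl_sat _ _ _) (H3 t R)) as [p [Ip Sp]].
      destruct (proj1 (Dia_sat _ _ _ _) (H2' (Dia i p) (in_map _ _ _ Ip))) as [t' [R' St']].
      exists t'; split; auto. eapply h0; eauto. eapply powl_sub; eauto.
    + intros t' R'. destruct (proj1 (disjl_sat _ _ _) (H3' t' R')) as [p [Ip Sp]].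
      destruct (proj1 (Dia_sat _ _ _ _) (H2 (Dia i p) (in_map _ _ _ Ip))) as [t [R St]].
      exists t; split; auto. eapply h0; eauto. eapply powl_sub; eauto.
Qed.

Lemma types_char {Atom Ag : Type} (B : list (@form Atom Ag)) lAg (hAg : forall i, In i lAg) n M M' :
  forall c s s', In c (types B lAg n) -> sat M s c -> sat M' s' c -> eqv B n M M' s s'.
Proof.
  induction n as [|n IHn]; simpl; intros c s s' Ic H H'.
  - eapply lits_char; eauto.
  - destruct (fold_char B _ n M M' IHn lAg c s s' Ic H H') as [E0 E].
    split; auto.
Qed.

Lemma mpoint_eq {Atom Ag : Type} (X : @pmodel Atom Ag -> Prop) (d : mspace X) y hy :
  proj1_sig d = mclass X y -> d = mpoint X y hy.
Proof.
  destruct d as [D p]; simpl; intro E; subst D. unfold mpoint. f_equal. apply proof_irrelevance.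
Qed.

Theorem proposition7 (Atom Ag : Type) (hAtom : countable Atom) (hAg : finite_type Ag)
  (L : @form Atom Ag -> Prop) (hL : normal_logic L)
  (X : @pmodel Atom Ag -> Prop)
  (hX : forall x, X x -> forall p, L p -> psat x p)
  (f : mspace X -> mspace X) :
  clean L X f -> stone_continuous X f.
Proof.
  intros [S0 [[l hl] [hclos [hdet [hexh hf]]]]] O HO c Oc.
  destruct hAg as [lAg hlAg].
  destruct (HO (f c) Oc) as [phi [Bf Hphi]].
  assert (fval : forall x (hx : X x), exists a (ha : des S0 a) (h : psat x (pre S0 a))
            (hz : X (upd_pointed (pm x) S0 (pt x) a h)),
            f (mpoint X x hx) = mpoint X _ hz).
  { intros x hx. destruct (hclos x hx) as [a [ha [h hz]]].
    exists a, ha, h, hz. apply hf. exists a, ha, h. split; [exact hz| tauto]. }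
  destruct (proj2_sig c) as [x [Xx EC]].
  rewrite (mpoint_eq X c x Xx EC) in Bf.
  set (B := map Var (atoms phi) ++ l).
  destruct (types_cover B lAg (depth phi) (pm x) (pt x)) as [chi [Ichi Schi]].
  exists chi. split.
  { exists x; auto. }
  intros d [y [Xy [Ed Sy]]]. apply Hphi.
  rewrite (mpoint_eq X d y Xy Ed).
  destruct (fval x Xx) as [a [ha [h [hz Fx]]]].
  destruct (fval y Xy) as [a' [ha' [h' [hz' Fy]]]].
  rewrite Fy. exists (upd_pointed (pm y) S0 (pt y) a' h'). split; [exact hz'|split; [reflexivity|]].
  rewrite Fx in Bf. destruct Bf as [w [Xw [Ew Sw]]]. simpl in Ew.
  assert (Sz : psat (upd_pointed (pm x) S0 (pt x) a h) phi).
  { assert (Hz : mclass X (upd_pointed (pm x) S0 (pt x) a h) (upd_pointed (pm x) S0 (pt x) a h))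
      by (split; [exact hz|tauto]).
    rewrite Ew in Hz. destruct Hz as [_ Hz]. apply Hz; exact Sw. }
  assert (hB : forall b, exists q, In q B /\ lequiv L (pre S0 b) q).
  { intro b. destruct (hl b) as [q [Iq Eq]]. exists q; split; auto.
    unfold B; apply in_or_app; auto. }
  assert (Eroot : eqv B (depth phi) (pm x) (pm y) (pt x) (pt y))
    by (eapply types_char; eauto).
  assert (Lx : Lst L (pm x) (pt x)) by (intros p Hp; exact (hX x Xx p Hp)).
  assert (Ly : Lst L (pm y) (pt y)) by (intros p Hp; exact (hX y Xy p Hp)).
  assert (hya : psat y (pre S0 a)).
  { destruct (hB a) as [q [Iq Eq]].
    unfold psat. apply (lequiv_sat L _ _ _ _ Ly Eq).
    apply (eqv_0 _ _ _ _ _ _ Eroot q Iq).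
    apply (lequiv_sat L _ _ _ _ Lx Eq). exact h. }
  destruct (classic (a = a')) as [<-|Ne].
  2: { exfalso. exact (hdet y Xy a a' ha ha' Ne (conj hya h')). }
  unfold psat in *. simpl in *.
  refine (proj1 (upd_eqv L hL S0 B hB (pm x) (pm y) (pt x) a h (pt y) a h'
            phi (depth phi) (le_n _) _ (exist _ (pt x, a) h) (exist _ (pt y, a) h') eq_refl Lx Ly Eroot) Sz).
  intros b Ib; unfold B; apply in_or_app; left; apply in_map; exact Ib.
Qed.
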